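(* Let $X$ be a real Banach space and $f:X\to\mathbb{R}\cup\{+\infty\}$ proper, convex and lsc. Then for every $(w,v^* )\in\mathrm{dom}\, f\times\mathrm{dom}\, f^*$, \[ f(w)+f^*(v^* ) = F_{\partial f}(w,v^* ) + K_{\partial f}(w,v^* ). \]
   Context: $f^*$ is the Fenchel conjugate. For $\varepsilon\ge0$, $\partial_\varepsilon f(x)=\{x^*: f(y)-f(x)\ge\langle y-x,x^*\rangle-\varepsilon\ \forall y\}$, and analogously $\partial_\varepsilon f^*(x^* )=\{y\in X: f^*(z^* )-f^*(x^* )\ge\langle y,z^*-x^*\rangle-\varepsilon\ \forall z^*\}$. Define $\partial_\varepsilon(f^*\oplus f)(x,x^* )=\{(y,y^* )\in X\times X^*: y^*\in\partial_a f(x),\ y\in\partial_b f^*(x^* )\text{ for some } a,b\ge0 \text{ with } a+b\le\varepsilon\}$ and $K_{\partial f}(x,x^* )=\inf\{\varepsilon\ge0: \mathrm{Gr}(\partial f)\cap\partial_\varepsilon(f^*\oplus f)(x,x^* )\neq\varnothing\}$. $F_{\partial f}(x,x^* )=\sup_{(y,y^* )\in\mathrm{Gr}(\partial f)}\{\langle y,x^*\rangle+\langle x,y^*\rangle-\langle y,y^*\rangle\}$. *)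

(* Defs.v *)
From HB Require Import structures.
From mathcomp Require Import all_boot all_order all_algebra.
From mathcomp Require Import all_classical all_reals all_analysis.
Set Implicit Arguments. Unset Strict Implicit. Unset Printing Implicit Defensive.
Import Order.TTheory GRing.Theory Num.Theory.
Import numFieldNormedType.Exports.
Local Open Scope classical_set_scope.
Local Open Scope ring_scope.

Section Fenchel.
Context {R : realType} {X : completeNormedModType R}.

(* Elements of the topological dual X^* : continuous linear functionals,
   represented as functions X -> R; <x, x^*> is written  xs x. *)
Definition is_dual (xs : X -> R) : Prop :=
  (forall (a : R) (x y : X), xs (a *: x + y) = a * xs x + xs y) /\ continuous xs.

Local Open Scope ereal_scope.

Definition proper_fun (f : X -> \bar R) : Prop :=
  (forall x, f x != -oo) /\ (exists x, f x < +oo).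

Definition convex_fun (f : X -> \bar R) : Prop :=
  forall (x y : X) (t : R), (0 < t < 1)%R ->
    f ((t *: x + (1 - t) *: y)%R) <= t%:E * f x + (1 - t)%:E * f y.

Definition dom (f : X -> \bar R) : set X := [set x | f x < +oo].

Definition conj (f : X -> \bar R) (xs : X -> R) : \bar R :=
  ereal_sup [set (xs x)%:E - f x | x in setT].

Definition dom_conj (f : X -> \bar R) : set (X -> R) :=
  [set xs | is_dual xs /\ conj f xs < +oo].

Definition esubdiff (eps : R) (f : X -> \bar R) (x : X) : set (X -> R) :=
  [set xs | is_dual xs /\
     forall y, f x + (xs (y - x)%R - eps)%:E <= f y].

Definition esubdiff_conj (eps : R) (f : X -> \bar R) (xs : X -> R) : set X :=
  [set y | forall zs, is_dual zs ->
     conj f xs + (zs y - xs y - eps)%:E <= conj f zs].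

Definition graph_subdiff (f : X -> \bar R) : set (X * (X -> R)) :=
  [set p | esubdiff 0 f p.1 p.2].

(* ∂_eps (f^* ⊕ f)(x, xs) *)
Definition esubdiff_sum (eps : R) (f : X -> \bar R) (x : X) (xs : X -> R)
  : set (X * (X -> R)) :=
  [set p | exists a b : R, [/\ (0 <= a)%R, (0 <= b)%R, (a + b <= eps)%R,
      esubdiff a f x p.2 & esubdiff_conj b f xs p.1]].

Definition K_subdiff (f : X -> \bar R) (x : X) (xs : X -> R) : \bar R :=
  ereal_inf [set eps%:E | eps in [set eps : R | (0 <= eps)%R /\
     (graph_subdiff f `&` esubdiff_sum eps f x xs) !=set0]].

Definition F_subdiff (f : X -> \bar R) (x : X) (xs : X -> R) : \bar R :=
  ereal_sup [set (xs p.1 + p.2 x - p.2 p.1)%:E | p in graph_subdiff f].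

End Fenchel.

(* Main.v *)
Require Import Defs.
From HB Require Import structures.
From mathcomp Require Import all_boot all_order all_algebra.
From mathcomp Require Import all_classical all_reals all_analysis.
From mathcomp Require Import ring lra.
Import Order.TTheory GRing.Theory Num.Theory.
Import numFieldNormedType.Exports.
Local Open Scope classical_set_scope.
Local Open Scope ring_scope.
Set Implicit Arguments. Unset Strict Implicit. Unset Printing Implicit Defensive.
Section InfLemmas.
Variable R : realType.

Lemma inf_geP (T : Type) (I : set T) (a : T -> R) c :
  I !=set0 -> (forall i, I i -> c <= a i) -> c <= inf (a @` I).
Proof.
move=> [i Ii] H; apply: lb_le_inf; first by exists (a i), i.
by move=> _ [j Ij <-]; apply: H.
Qed.

Lemma inf_leP (T : Type) (I : set T) (a : T -> R) b i :
  (forall j, I j -> b <= a j) -> I i -> inf (a @` I) <= a i.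
Proof.
move=> Hb Ii; apply: ge_inf; last by exists i.
by exists b => _ [j Ij <-]; apply: Hb.
Qed.

Lemma inf_add2 (T U : Type) (I : set T) (J : set U) (a : T -> R) (b : U -> R) c :
  I !=set0 -> J !=set0 -> (forall i j, I i -> J j -> c <= a i + b j) ->
  c <= inf (a @` I) + inf (b @` J).
Proof.
move=> I0 J0 H.
have H1 : forall i, I i -> c - a i <= inf (b @` J).
  move=> i Ii; apply: inf_geP => // j Jj; rewrite lerBlDl; exact: H.
rewrite -lerBlDr; apply: inf_geP => // i Ii.
by rewrite lerBlDl -lerBlDr; apply: H1.
Qed.
End InfLemmas.

Section HahnBanach.
Variables (R : realType) (V : lmodType R).

Definition sublin (q : V -> R) :=
  (forall x y, q (x + y) <= q x + q y) /\
  (forall (t : R) x, 0 <= t -> q (t *: x) = t * q x).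

Lemma sublin0 q : sublin q -> q 0 = 0.
Proof. by move=> [_ h]; rewrite -(scale0r (0 : V)) h // mul0r. Qed.

Lemma sublin_lb q : sublin q -> forall x, - q (- x) <= q x.
Proof.
move=> hq x; have := hq.1 x (- x); rewrite subrr (sublin0 hq); lra.
Qed.

Lemma homog_from (F : V -> R) : F 0 = 0 ->
  (forall t x, 0 < t -> F (t *: x) <= t * F x) ->
  forall t x, 0 <= t -> F (t *: x) = t * F x.
Proof.
move=> F0 H t x; rewrite le_eqVlt => /orP[/eqP <-|t0].
  by rewrite scale0r mul0r.
apply/le_anti; rewrite H //=.
have ti : 0 < t^-1 by rewrite invr_gt0.
have := H t^-1 (t *: x) ti; rewrite scalerA mulVf ?gt_eqF // scale1r => h.
by rewrite -(ler_pM2l ti) mulrA mulVf ?gt_eqF // mul1r.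
Qed.
End HahnBanach.
Section HB2.
Variables (R : realType) (V : lmodType R).

Lemma minimal_odd (q : V -> R) : sublin q ->
  (forall q', sublin q' -> (forall x, q' x <= q x) -> forall x, q x <= q' x) ->
  forall x, q (- x) = - q x.
Proof.
move=> hq hmin z.
pose S x := [set t : R | 0 <= t].
pose qz x := inf ((fun t => q (x + t *: z) - t * q z) @` [set t : R | 0 <= t]).
have S0 : [set t : R | 0 <= t] !=set0 by exists 0%R => /=.
have lbz : forall x t, 0 <= t -> - q (- x) <= q (x + t *: z) - t * q z.
  move=> x t t0; rewrite -hq.2 //.
  have := hq.1 (x + t *: z) (- x); rewrite addrAC subrr add0r; lra.
have qz_le : forall x t, 0 <= t -> qz x <= q (x + t *: z) - t * q z.
  move=> x t t0; apply: (@inf_leP _ _ _ _ (- q (- x))) => //.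
  by move=> s s0; apply: lbz.
have qz_ge : forall x, - q (- x) <= qz x.
  by move=> x; apply: inf_geP => // t t0; apply: lbz.
have hqz : sublin qz.
  split.
    move=> x y; apply: inf_add2 => // s t s0 t0.
    apply: le_trans (qz_le _ (s + t) _) _; first by rewrite addr_ge0.
    rewrite scalerDl mulrDl.
    have := hq.1 (x + s *: z) (y + t *: z).
    have -> : x + s *: z + (y + t *: z) = x + y + (s *: z + t *: z).
      by rewrite addrACA.
    lra.
  apply: homog_from.
    apply/le_anti/andP; split.
      by have := qz_le 0 0 (lexx _); rewrite scale0r !addr0 mul0r subr0 (sublin0 hq).
    by have := qz_ge 0; rewrite oppr0 (sublin0 hq) oppr0.
  move=> t x t0.
  have ti : 0 < t^-1 by rewrite invr_gt0.
  suff h : t^-1 * qz (t *: x) <= qz x.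
    by rewrite -(ler_pM2l ti) mulrA mulVf ?gt_eqF // mul1r.
  apply: inf_geP => // s s0.
  have := qz_le (t *: x) (t * s) (mulr_ge0 (ltW t0) s0).
  rewrite -scalerA -scalerDr hq.2; last exact: ltW.
  rewrite -mulrA -mulrBr.
  move=> h.
  by rewrite -(ler_pM2l t0) mulrA mulfV ?gt_eqF // mul1r.
have qz_q : forall x, qz x <= q x.
  by move=> x; have := qz_le x 0 (lexx _); rewrite scale0r addr0 mul0r subr0.
have h1 := hmin qz hqz qz_q (- z).
have h2 := qz_le (- z) 1 ler01.
rewrite scale1r addNr (sublin0 hq) mul1r sub0r in h2.
have h3 := sublin_lb hq z.
apply/le_anti/andP; split; [exact: le_trans h1 h2 | lra].
Qed.

Lemma odd_linear (q : V -> R) : sublin q -> (forall x, q (- x) = - q x) ->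
  forall a x y, q (a *: x + y) = a * q x + q y.
Proof.
move=> hq hodd.
have hadd : forall x y, q (x + y) = q x + q y.
  move=> x y; apply/le_anti/andP; split; first exact: hq.1.
  have := hq.1 (- x) (- y); rewrite -opprD !hodd; lra.
move=> a x y; rewrite hadd; congr (_ + _).
have [a0|a0] := leP 0 a; first by rewrite hq.2.
have -> : a *: x = (- a) *: (- x) by rewrite scaleNr scalerN opprK.
by rewrite hq.2 ?oppr_ge0 ?ltW // hodd mulrNN.
Qed.

End HB2.
Section HB3.
Variables (R : realType) (V : lmodType R).

Lemma minimal_exists (p : V -> R) : sublin p -> exists q : V -> R,
  [/\ sublin q, (forall x, q x <= p x) &
     (forall q', sublin q' -> (forall x, q' x <= q x) -> forall x, q x <= q' x)].
Proof.
move=> hp.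
pose T := {q : V -> R | sublin q /\ forall x, q x <= p x}.
pose Rl := fun a b : T => `[< forall x, sval b x <= sval a x >].
have t0 : T := exist _ p (Logic.conj hp (fun x => lexx _)).
have [| | |m mmax] := @ZL_preorder T t0 Rl.
- by move=> a; apply/asboolP => x.
- move=> a b c /asboolP hab /asboolP hbc; apply/asboolP => x.
  exact: le_trans (hbc x) (hab x).
- move=> A Atot.
  case: (pselect (A !=set0)) => [[a0 Aa0]|A0]; last first.
    by exists t0 => s As; exfalso; apply: A0; exists s.
  pose m x := inf ((fun a : T => sval a x) @` A).
  have lbA : forall x (a : T), A a -> - p (- x) <= sval a x.
    move=> x a _; have := sublin_lb (proj1 (svalP a)) x.
    have := (proj2 (svalP a)) (- x); lra.
  have m_le : forall x a, A a -> m x <= sval a x.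
    by move=> x a Aa; apply: (@inf_leP _ _ _ _ (- p (- x))) => // b Ab; apply: lbA.
  have A0 : A !=set0 by exists a0.
  have hm : sublin m.
    split.
      move=> x y; apply: inf_add2 => // a b Aa Ab.
      case: (Atot a b Aa Ab) => /asboolP h.
        apply: le_trans (m_le _ _ Ab) _.
        apply: le_trans ((proj1 (svalP b)).1 x y) _; rewrite lerD2r; exact: h.
      apply: le_trans (m_le _ _ Aa) _.
      apply: le_trans ((proj1 (svalP a)).1 x y) _; rewrite lerD2l; exact: h.
    apply: homog_from.
      apply/le_anti/andP; split.
        by have := m_le 0 a0 Aa0; rewrite (sublin0 (proj1 (svalP a0))).
      by apply: inf_geP => // a _; rewrite (sublin0 (proj1 (svalP a))).
    move=> t x t0'.
    suff h : t^-1 * m (t *: x) <= m x.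
      have ti : 0 < t^-1 by rewrite invr_gt0.
      by rewrite -(ler_pM2l ti) mulrA mulVf ?gt_eqF // mul1r.
    apply: inf_geP => // a Aa.
    have := m_le (t *: x) a Aa; rewrite ((proj1 (svalP a)).2 t x (ltW t0')) => h.
    by rewrite -(ler_pM2l t0') mulrA mulfV ?gt_eqF // mul1r.
  have mp : forall x, m x <= p x.
    by move=> x; apply: le_trans (m_le x a0 Aa0) _; exact: (proj2 (svalP a0)).
  by exists (exist _ m (Logic.conj hm mp)) => s As; apply/asboolP => x /=; exact: m_le.
- exists (sval m); split; [exact: (proj1 (svalP m))|exact: (proj2 (svalP m))|].
  move=> q' hq' h.
  pose s : T := exist _ q' (Logic.conj hq' (fun x => le_trans (h x) (proj2 (svalP m) x))).
  have /asboolP := mmax s (asboolT h); exact.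
Qed.

Lemma hahn_banach (p : V -> R) : sublin p -> exists l : V -> R,
  (forall a x y, l (a *: x + y) = a * l x + l y) /\ (forall x, l x <= p x).
Proof.
move=> hp; have [q [hq qp qmin]] := minimal_exists hp.
exists q; split => //; apply: odd_linear => //; exact: minimal_odd.
Qed.
End HB3.
Lemma exists_e (R : realType) (eps : R) : 0 < eps -> exists N : nat, N.+1%:R^-1 < eps.
Proof.
move=> e0; have [N _ hN] := near_infty_natSinv_lt (PosNum e0).
by exists N; apply: hN => /=.
Qed.

Section Ekeland.
Variables (R : realType) (X : completeNormedModType R).

Lemma ekeland_real (D : set X) (G : X -> R) (c : R) (x0 : X) :
  D x0 -> (forall x, D x -> c <= G x) ->
  (forall (u : nat -> X) y x b, u @ \oo --> y ->
     (\forall n \near \oo, D (u n) /\ G (u n) + `|u n - x| <= b) ->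
     D y /\ G y + `|y - x| <= b) ->
  exists y, D y /\ forall z, D z -> G y <= G z + `|z - y|.
Proof.
move=> Dx0 Gc hcl.
pose S x z := D z /\ G z + `|z - x| <= G x.
pose m x := inf [set G z | z in S x].
pose e (n : nat) : R := n.+1%:R^-1.
have e0 : forall n, 0 < e n by move=> n; rewrite invr_gt0.
have S_refl : forall x, D x -> S x x by move=> x Dx; split => //; rewrite subrr normr0 addr0.
have S_trans : forall x y z, S x y -> S y z -> S x z.
  move=> x y z [_ h1] [Dz h2]; split => //.
  have := ler_distD y z x; lra.
have m_le : forall x z, S x z -> m x <= G z.
  by move=> x z Sz; apply: (@inf_leP _ _ _ _ c) => // w [Dw _]; apply: Gc.
have hstep : forall p : X * nat, exists z, D p.1 -> S p.1 z /\ G z <= m p.1 + e p.2.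
  move=> [x n] /=; case: (pselect (D x)) => Dx; last by exists x.
  have : m x < m x + e n by rewrite ltrDl.
  move/inf_lt => [|_ [z Sz <-] lt]; first by exists (G x); exists x => //; exact: S_refl.
  by exists z => _; split => //; exact: ltW.
have [step hs] := choice hstep.
pose xs := fix f (n : nat) := match n with 0%N => x0 | n'.+1 => step (f n', n') end.
have hD : forall n, D (xs n).
  by elim=> [|n IH] //=; exact: ((hs (xs n, n) IH).1).1.
have hSn : forall n, S (xs n) (xs n.+1) by move=> n; exact: ((hs (xs n, n) (hD n)).1).
have hchain : forall n k, S (xs n) (xs (k + n)%N).
  move=> n; elim=> [|k IH]; first exact: S_refl.
  by apply: S_trans IH _; rewrite addSn; exact: hSn.
have key : forall n w, S (xs n.+1) w -> `|w - xs n.+1| <= e n.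
  move=> n w Sw.
  have h1 := m_le _ _ (S_trans _ _ _ (hSn n) Sw).
  have h2 := (hs (xs n, n) (hD n)).2.
  move: Sw => [_ h3] /=; simpl in h2; lra.
have hcauchy : cauchy_ex (xs @ \oo).
  move=> eps eps0; have [N hN] := exists_e eps0.
  exists (xs N.+1); exists N.+1 => // n /= hn.
  rewrite -ball_normE /= distrC.
  have -> : n = ((n - N.+1) + N.+1)%N by rewrite subnK.
  exact: le_lt_trans (key N _ (hchain _ _)) hN.
have cx : cvg (xs @ \oo) by apply: cauchy_cvg; exact: cauchy_exP hcauchy.
set y := lim (xs @ \oo) in cx.
have Sy : forall n, S (xs n) y.
  move=> n; apply: (hcl xs y (xs n) (G (xs n)) cx).
  exists n => // k /= hk.
  have -> : k = ((k - n) + n)%N by rewrite subnK.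
  exact: hchain.
exists y; split; first exact: (Sy 0%N).1.
move=> z Dz; rewrite leNgt; apply/negP => lt.
have Syz : S y z by split => //; exact: ltW.
have hb : forall n, `|z - y| <= e n + e n.
  move=> n; have h1 := key n z (S_trans _ _ _ (Sy n.+1) Syz).
  have h2 := key n y (Sy n.+1).
  have := ler_distD (xs n.+1) z y; rewrite (distrC (xs n.+1) y); lra.
have zy : `|z - y| = 0.
  apply/eqP; rewrite eq_le normr_ge0 andbT; rewrite leNgt; apply/negP => pos.
  have [N hN] := exists_e (divr_gt0 pos (ltr0n _ 2)).
  have := hb N; rewrite /e => h.
set a := N.+1%:R^-1 in hN h.
set b := `|z - y| in hN h.
clearbody a b.
lra.
move: lt; rewrite zy addr0.
by move/normr0_eq0/eqP: zy; rewrite subr_eq0 => /eqP ->; rewrite ltxx.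
Qed.
End Ekeland.
Section Ekeland2.
Variables (R : realType) (X : completeNormedModType R).
Local Open Scope ereal_scope.

Lemma ev_nat (P : nat -> Prop) : (\forall n \near \oo, P n) -> exists N, forall n, (N <= n)%N -> P n.
Proof. by move=> [N _ hN]; exists N. Qed.

Lemma lsc_seq (g : X -> \bar R) (u : nat -> X) (y x : X) (b : R) :
  (forall z, g z != -oo) -> lower_semicontinuous g -> u @ \oo --> y ->
  (\forall n \near \oo, g (u n) + (`|u n - x|)%:E <= b%:E) ->
  g y + (`|y - x|)%:E <= b%:E.
Proof.
move=> gN lsc hu hev; rewrite leNgt; apply/negP => hlt.
have [d [d0 hd]] : exists d : R, (0 < d)%R /\ (b - `|y - x| + d)%R%:E < g y.
  move: hlt (gN y); case: (g y) => [r| |] //= hlt _.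
    exists ((r + `|y - x| - b) / 2)%R; rewrite -EFinD lte_fin in hlt; rewrite lte_fin.
    set t := (`|y - x|)%R in hlt *; clearbody t; split; lra.
  by exists 1%R; split => //; rewrite ltry.
have [V hV hVg] := lsc y _ hd.
have [N1 h1] := ev_nat (hu _ hV).
have [N2 h2] := ev_nat (hu _ (nbhsx_ballx y d d0)).
have [N3 h3] := ev_nat hev.
pose n := maxn N1 (maxn N2 N3).
have := hVg _ (h1 n (leq_maxl _ _)).
have := h2 n (leq_trans (leq_maxl _ _) (leq_maxr _ _)).
have := h3 n (leq_trans (leq_maxr _ _) (leq_maxr _ _)).
rewrite -ball_normE /=.
have := ler_distD (u n) y x; rewrite (distrC y (u n)).
move: (gN (u n)); case: (g (u n)) => [r| |] //= _.
rewrite -EFinD !lte_fin lee_fin.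
set t1 := `|u n - x|%R; set t2 := `|y - x|%R; set t3 := `|u n - y|%R.
clearbody t1 t2 t3; lra.
Qed.

Lemma ekeland (g : X -> \bar R) : (forall x, g x != -oo) -> lower_semicontinuous g ->
  (exists c : R, forall x, c%:E <= g x) -> (exists x0, g x0 < +oo) ->
  exists y, g y < +oo /\ forall z, g y <= g z + (`|z - y|)%:E.
Proof.
move=> gN lsc [c hc] [x0 hx0].
have gfin : forall x, g x < +oo -> g x = (fine (g x))%:E.
  by move=> x hx; rewrite fineK // fin_numE gN /= lt_eqF.
have [x Dx|u y x b hu hev|y [Dy hy]] :=
  @ekeland_real R X [set x | g x < +oo] (fun x => fine (g x)) c x0 hx0.
- by rewrite -lee_fin -gfin.
- have hev' : \forall n \near \oo, g (u n) + (`|u n - x|)%:E <= b%:E.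
    move: hev; apply: filterS => n /= [Dn hn].
    by rewrite gfin // -EFinD lee_fin.
  move: (gN y) (lsc_seq gN lsc hu hev') => /=.
  case: (g y) => [r| |] //= _ h; split.
  + exact: ltry.
  + by rewrite -lee_fin EFinD.
- exists y; split => // z.
  case: (pselect (g z < +oo)) => hz.
    by rewrite (gfin y Dy) (gfin z hz) -EFinD lee_fin; apply: hy.
  by move/negP: hz; rewrite -leNgt leye_eq => /eqP ->; rewrite addye // leey.
Qed.
End Ekeland2.
Section Sub.
Variables (R : realType) (X : completeNormedModType R).

Lemma dual0 (vs : X -> R) : is_dual vs -> vs 0 = 0%R.
Proof. by move=> [h _]; have := h 1%R (0:X) (0:X); rewrite scale1r addr0 mul1r; lra. Qed.

Lemma dualD (vs : X -> R) x y : is_dual vs -> vs (x + y) = (vs x + vs y)%R.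
Proof. by move=> [h _]; have := h 1%R x y; rewrite scale1r mul1r. Qed.

Lemma dualZ (vs : X -> R) a x : is_dual vs -> vs (a *: x) = (a * vs x)%R.
Proof. by move=> hv; have := hv.1 a x (0:X); rewrite !addr0 (dual0 hv) addr0. Qed.

Lemma dualN (vs : X -> R) x : is_dual vs -> vs (- x) = (- vs x)%R.
Proof. by move=> hv; rewrite -scaleN1r (dualZ _ _ hv) mulN1r. Qed.

Lemma dualB (vs : X -> R) x y : is_dual vs -> vs (x - y) = (vs x - vs y)%R.
Proof. by move=> hv; rewrite (dualD _ _ hv) (dualN _ hv). Qed.

Local Open Scope ereal_scope.

Lemma lsc_sub (f : X -> \bar R) (h : X -> R) :
  lower_semicontinuous f -> continuous h ->
  lower_semicontinuous (fun x => f x - (h x)%:E).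
Proof.
move=> lf ch x a ha.
have [d [d0 hd]] : exists d : R, (0 < d)%R /\ (a + h x + d)%R%:E < f x.
  move: ha; case: (f x) => [r| |] //= ha.
    exists ((r - h x - a) / 2)%R; rewrite -EFinB lte_fin in ha; rewrite lte_fin.
    split; lra.
  by exists 1%R; split => //; rewrite ltry.
have [V1 hV1 hV1f] := lf x _ hd.
have hV2 : nbhs x (h @^-1` ball (h x) d) := ch x _ (nbhsx_ballx (h x) d d0).
exists (V1 `&` h @^-1` ball (h x) d); first exact: filterI.
move=> z [/hV1f hz]; rewrite -ball_normE /= => hb.
have := ltrNnormlW hb.
move: hz; case: (f z) => [r| |] //=.
  by rewrite -EFinB !lte_fin => h1 h2; lra.
by move=> _ _; rewrite addye // ltry.
Qed.

Lemma lip_cont (l : X -> R) : (forall x z, (`|l x - l z| <= `|x - z|)%R) -> continuous l.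
Proof.
move=> hl x; apply/cvgrPdist_lt => e e0.
apply: filterS (nbhsx_ballx x e e0) => z; rewrite -ball_normE /= => hz.
exact: le_lt_trans (hl x z) hz.
Qed.
End Sub.
Section Sub2.
Variables (R : realType) (X : completeNormedModType R).
Local Open Scope ereal_scope.

Lemma subgrad_exists (f : X -> \bar R) (vs : X -> R) :
  proper_fun f -> convex_fun f -> lower_semicontinuous f -> is_dual vs ->
  conj f vs < +oo -> exists p, graph_subdiff f p.
Proof.
move=> [fN [x0 fx0]] fc flsc hvs hconj.
have ffin : forall x, f x < +oo -> f x = (fine (f x))%:E.
  by move=> x hx; rewrite fineK // fin_numE fN /= lt_eqF.
pose g x := f x - (vs x)%:E.
have gN : forall x, g x != -oo by move=> x; rewrite /g; case: (f x) (fN x).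
have glsc : lower_semicontinuous g := lsc_sub flsc hvs.2.
have ub : forall x, (vs x)%:E - f x <= conj f vs.
  by move=> x; apply: ereal_sup_ubound; exists x.
have conjN : conj f vs \is a fin_num.
  rewrite fin_numE (lt_eqF hconj) andbT; have := ub x0; rewrite (ffin x0 fx0).
  by case: (conj f vs).
set C := fine (conj f vs).
have gc : forall x, (- C)%:E <= g x.
  move=> x; have := ub x; rewrite -(fineK conjN) -/C /g.
  case: (f x) (fN x) => [r| |] //= _; last by rewrite addye // leey.
  by rewrite -!EFinB !lee_fin; lra.
have gx0 : g x0 < +oo by rewrite /g (ffin x0 fx0) -EFinB; exact: ltry.
have [y [gy hy]] := ekeland gN glsc (ex_intro _ (- C)%R gc) (ex_intro _ x0 gx0).
have fy : f y < +oo.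
  move: gy; rewrite /g; case: (f y) (fN y) => [r _ _|_|//]; first exact: ltry.
  by rewrite addye.
pose G z := (fine (f z) - vs z)%R.
have gG : forall z, f z < +oo -> g z = (G z)%:E.
  by move=> z hz; rewrite /g (ffin z hz) -EFinB.
have calm : forall z, f z < +oo -> (G y <= G z + `|z - y|)%R.
  by move=> z hz; have := hy z; rewrite !gG // -EFinD lee_fin.
Local Close Scope ereal_scope.
pose I := [set p : R * X | 0 < p.1 /\ (f p.2 < +oo)%E].
pose a x (p : R * X) := p.1 * (G p.2 - G y) + `|x - p.1 *: (p.2 - y)|.
pose q x := inf (a x @` I).
have I0 : I (1, y) by split => //=; exact: ltr01.
have Ine : I !=set0 by exists (1, y).
have a_lb : forall x p, I p -> - `|x| <= a x p.
  move=> x [s u] [/= s0 fu]; rewrite /a /=.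
  have h1 := calm u fu.
  have h2 : s * (G y - G u) <= s * `|u - y| by rewrite ler_pM2l //; lra.
  have h3 := ler_distD x 0 (s *: (u - y)).
  rewrite sub0r normrN add0r normrN normrZ gtr0_norm // in h3.
  rewrite mulrBr in h2; rewrite mulrBr; lra.
have q_le : forall x p, I p -> q x <= a x p.
  by move=> x p Ip; apply: (@inf_leP _ _ _ _ (- `|x|)) => // p' Ip'; apply: a_lb.
have q_ge : forall x, - `|x| <= q x.
  by move=> x; apply: inf_geP => // p Ip; apply: a_lb.
have hq : sublin q.
  split.
    move=> x1 x2; apply: inf_add2 => // -[s1 u1] -[s2 u2] [/= s10 fu1] [/= s20 fu2].
    have s0 : 0 < s1 + s2 by rewrite addr_gt0.
    pose lam := s1 / (s1 + s2).
    have hl : 0 < lam < 1.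
      by rewrite divr_gt0 //= ltr_pdivrMr // mul1r ltrDl.
    have e1 : (s1 + s2) * lam = s1 by rewrite /lam mulrCA mulfV ?gt_eqF // mulr1.
    have e2 : (s1 + s2) * (1 - lam) = s2 by rewrite mulrBr mulr1 e1 addrAC subrr add0r.
    clearbody lam.
    pose u := lam *: u1 + (1 - lam) *: u2.
    have cv := fc u1 u2 lam hl; rewrite -/u in cv.
    rewrite (ffin u1 fu1) (ffin u2 fu2) -!EFinM -EFinD in cv.
    have fu : (f u < +oo)%E := le_lt_trans cv (ltry _).
    rewrite (ffin u fu) lee_fin in cv.
    have vu : vs u = lam * vs u1 + (1 - lam) * vs u2.
      by rewrite (dualD _ _ hvs) !(dualZ _ _ hvs).
    apply: le_trans (q_le _ (s1 + s2, u) (Logic.conj s0 fu)) _; rewrite /a /=.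
    have vec : (s1 + s2) *: (u - y) = s1 *: (u1 - y) + s2 *: (u2 - y).
      rewrite /u scalerBr scalerDr !scalerA e1 e2 !scalerBr scalerDl opprD.
      by rewrite addrACA.
    rewrite vec.
    have nrm : `|x1 + x2 - (s1 *: (u1 - y) + s2 *: (u2 - y))| <=
               `|x1 - s1 *: (u1 - y)| + `|x2 - s2 *: (u2 - y)|.
      by rewrite opprD addrACA ler_normD.
    have val : (s1 + s2) * (G u - G y) <= s1 * (G u1 - G y) + s2 * (G u2 - G y).
      have h : G u - G y <= lam * (G u1 - G y) + (1 - lam) * (G u2 - G y).
        rewrite /G vu; move: cv; set F1 := fine (f u1); set F2 := fine (f u2).
        set Fu := fine (f u); set Fy := fine (f y); nra.
      by move: h; rewrite -(ler_pM2l s0) [X in _ <= X]mulrDr !mulrA e1 e2.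
    by rewrite addrACA; exact: lerD val nrm.
  apply: homog_from.
    apply/le_anti/andP; split; last by have := q_ge 0; rewrite normr0 oppr0.
    have := q_le 0 (1, y) I0.
    by rewrite /a /= subrr mulr0 add0r subrr scaler0 subr0 normr0.
  move=> r x r0.
  suff h : r^-1 * q (r *: x) <= q x.
    have ri : 0 < r^-1 by rewrite invr_gt0.
    by rewrite -(ler_pM2l ri) mulrA mulVf ?gt_eqF // mul1r.
  apply: inf_geP => // -[s u] [/= s0 fu].
  have := q_le (r *: x) (r * s, u) (Logic.conj (mulr_gt0 r0 s0) fu).
  rewrite /a /= -scalerA -scalerBr normrZ gtr0_norm // -mulrA -mulrDr => h.
  by rewrite -(ler_pM2l r0) mulrA mulfV ?gt_eqF // mul1r.
have [l [hl lq]] := hahn_banach hq.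
have lle : forall x, l x <= `|x|.
  move=> x; apply: le_trans (lq x) _; apply: le_trans (q_le x (1, y) I0) _.
  by rewrite /a /= subrr mulr0 add0r subrr scaler0 subr0.
have l0 : l 0 = 0 by have := hl 1 0 0; rewrite scale1r addr0 mul1r; lra.
have lN : forall x, l (- x) = - l x.
  by move=> x; have := hl (-1) x 0; rewrite scaleN1r addr0 l0 addr0 mulN1r.
have lB : forall x z, l (x - z) = l x - l z.
  by move=> x z; have := hl 1 x (- z); rewrite scale1r mul1r lN.
have lcont : continuous l.
  apply: lip_cont => x z; rewrite -lB ler_norml lle andbT.
  by have := lle (z - x); rewrite -opprB lN normrN; lra.
have hld : is_dual l by split.
exists (y, fun x => l x + vs x); split.
  split.
    by move=> b x z /=; rewrite hl hvs.1 mulrDr addrACA.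
  move=> x; have := cvgD (lcont x) (hvs.2 x); exact.
move=> u /=.
case: (pselect (f u < +oo)%E) => fu; last first.
  by move/negP: fu; rewrite -leNgt leye_eq => /eqP ->; exact: leey.
have h1 : l (u - y) <= G u - G y.
  apply: le_trans (lq _) _; apply: le_trans (q_le _ (1, u) (Logic.conj ltr01 fu)) _.
  by rewrite /a /= mul1r scale1r subrr normr0 addr0.
rewrite (ffin u fu) (ffin y fy) -EFinD lee_fin (dualB _ _ hvs) lB.
move: h1; rewrite /G lB; lra.
Qed.
End Sub2.
Section Main.
Variables (R : realType) (X : completeNormedModType R).
Local Open Scope ereal_scope.

Lemma conj_ub (f : X -> \bar R) (vs : X -> R) x : (vs x)%:E - f x <= conj f vs.
Proof. by apply: ereal_sup_ubound; exists x. Qed.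

Lemma gr_conj (f : X -> \bar R) (p : X * (X -> R)) : proper_fun f -> graph_subdiff f p ->
  f p.1 < +oo /\ conj f p.2 = (p.2 p.1 - fine (f p.1))%:E.
Proof.
move=> [fN [x0 fx0]] [hd hs].
have fp : f p.1 < +oo.
  have := hs x0; case: (f p.1) (fN p.1) => [r _ _| _|//]; first exact: ltry.
  by rewrite addye // => h; have := le_lt_trans h fx0; rewrite ltxx.
split => //.
have ep : f p.1 = (fine (f p.1))%:E by rewrite fineK // fin_numE fN /= lt_eqF.
apply/le_anti/andP; split; last first.
  by have := conj_ub f p.2 p.1; rewrite ep -EFinB.
apply: ge_ereal_sup => _ [x _ <-].
have := hs x; rewrite ep (dualB _ _ hd).
move: (fN x); case: (f x) => [r| |] //= _.
  by rewrite -EFinD -EFinB !lee_fin; lra.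
by move=> _; rewrite addeNy leNye.
Qed.

Lemma main_thm (f : X -> \bar R) :
  proper_fun f -> convex_fun f -> lower_semicontinuous f ->
  forall (w : X) (vs : X -> R), w \in dom f -> vs \in dom_conj f ->
    f w + conj f vs = F_subdiff f w vs + K_subdiff f w vs.
Proof.
move=> hf fc flsc w vs /set_mem hw /set_mem [hvs hconj].
have [fN [x0 fx0]] := hf.
have ffin : forall x, f x < +oo -> f x = (fine (f x))%:E.
  by move=> x hx; rewrite fineK // fin_numE fN /= lt_eqF.
have conjN : conj f vs \is a fin_num.
  rewrite fin_numE (lt_eqF hconj) andbT; have := conj_ub f vs x0; rewrite (ffin x0 fx0).
  by case: (conj f vs).
set Cv := fine (conj f vs).
have eC : conj f vs = Cv%:E by rewrite fineK.
set fw := fine (f w).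
have ew : f w = fw%:E by rewrite ffin.
Local Close Scope ereal_scope.
set Lr := fw + Cv.
set Gr := graph_subdiff f.
pose phi (p : X * (X -> R)) := vs p.1 + p.2 w - p.2 p.1.
have Gr0 : Gr !=set0 := subgrad_exists hf fc flsc hvs hconj.
have grF : forall p, Gr p -> (f p.1 < +oo)%E /\ conj f p.2 = (p.2 p.1 - fine (f p.1))%:E.
  by move=> p Gp; apply: gr_conj.
have phi_le : forall p, Gr p -> phi p <= Lr.
  move=> p Gp; have [fp ec] := grF p Gp; move: (Gp) => [hd hs].
  have h1 := hs w; rewrite ew (ffin _ fp) (dualB _ _ hd) -EFinD lee_fin in h1.
  have h2 := conj_ub f vs p.1; rewrite eC (ffin _ fp) -EFinB lee_fin in h2.
  rewrite /phi /Lr; lra.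
have hub : has_ubound (phi @` Gr) by exists Lr => _ [p Gp <-]; apply: phi_le.
set Sr := sup (phi @` Gr).
have eF : F_subdiff f w vs = Sr%:E.
  rewrite /F_subdiff -/Gr -ereal_sup_EFin //; last by case: Gr0 => p Gp; exists (phi p), p.
  by rewrite image_comp.
pose E := [set eps : R | 0 <= eps /\ (Gr `&` esubdiff_sum eps f w vs) !=set0].
have E_ge : forall eps, E eps -> exists2 p, Gr p & Lr - phi p <= eps.
  move=> eps [_ [p [Gp [a [b [a0 b0 ab [_ ha] hb]]]]]].
  exists p => //; have [fp ec] := grF p Gp; move: (Gp) => [hd _].
  have h1 := ha p.1; rewrite ew (ffin _ fp) (dualB _ _ hd) -EFinD lee_fin in h1.
  have h2 := hb p.2 hd; rewrite eC ec -EFinD lee_fin in h2.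
  rewrite /phi /Lr; lra.
have E_in : forall p, Gr p -> E (Lr - phi p).
  move=> p Gp; have [fp ec] := grF p Gp; move: (Gp) => [hd hs].
  set F := fine (f p.1).
  have h1 := hs w; rewrite ew (ffin _ fp) (dualB _ _ hd) -EFinD lee_fin in h1.
  have h2 := conj_ub f vs p.1; rewrite eC (ffin _ fp) -EFinB lee_fin in h2.
  split; first by have := phi_le p Gp; lra.
  exists p; split => //.
  exists (fw + p.2 p.1 - F - p.2 w), (Cv + F - vs p.1); split.
  - by rewrite -/F in h1; lra.
  - by rewrite -/F in h2; lra.
  - by rewrite /phi /Lr le_eqVlt; apply/orP; left; apply/eqP; ring.
  - split => // u; rewrite ew (dualB _ _ hd).
    have := hs u; rewrite (ffin _ fp) -/F (dualB _ _ hd).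
    apply: le_trans; rewrite -!EFinD lee_fin; lra.
  - move=> zs hz; rewrite eC.
    have := conj_ub f zs p.1; rewrite (ffin _ fp) -/F.
    apply: le_trans; rewrite -EFinD -EFinB lee_fin; lra.
have E0 : E !=set0 by case: Gr0 => p Gp; exists (Lr - phi p); apply: E_in.
have Elb : has_lbound E by exists 0 => eps [].
have eK : K_subdiff f w vs = (Lr - Sr)%:E.
  rewrite /K_subdiff -/Gr -/E ereal_inf_EFin //; congr (_%:E).
  apply/le_anti/andP; split.
    have : forall p, Gr p -> phi p <= Lr - inf E.
      move=> p Gp; have := ge_inf Elb (E_in p Gp); lra.
    move=> h; have : Sr <= Lr - inf E.
      by apply: ge_sup => [|_ [p Gp <-]]; [case: Gr0 => p Gp; exists (phi p), p|exact: h].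
    lra.
  apply: lb_le_inf => // eps /E_ge [p Gp hp].
  have := ub_le_sup hub (ex_intro2 _ _ p Gp erefl); rewrite -/Sr; lra.
rewrite eF eK ew eC -!EFinD; congr (_%:E); rewrite /Lr; ring.
Qed.
End Main.
Unset Implicit Arguments.
Local Open Scope ereal_scope.

Theorem lemma4p9 (R : realType) (X : completeNormedModType R) (f : X -> \bar R) :
  proper_fun f -> convex_fun f -> lower_semicontinuous f ->
  forall (w : X) (vs : X -> R), w \in dom f -> vs \in dom_conj f ->
    f w + conj f vs = F_subdiff f w vs + K_subdiff f w vs.
Proof. exact: main_thm. Qed.
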